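(* Let $k$ be an odd integer with $k\ge 5$, let $D$ be a strong $k$-quasi-transitive digraph with $\mathrm{diam}(D)\ge k+2$, let $u,v\in V(D)$ with $d(u,v)=k+2$, and let $P=x_0x_1\ldots x_{k+2}$ be a shortest $(u,v)$-path with $x_0=u$, $x_{k+2}=v$. Let $I=\{x\in V(D)\setminus V(P): x\Rightarrow V(P)\}$, $W=\{x\in V(D)\setminus V(P): V(P)\Rightarrow x\}$ and $B=V(D)\setminus(V(P)\cup I\cup W)$. If $D[V(P)]$ is a semicomplete digraph, then for any $x\in B$, either $x$ is adjacent to every vertex of $V(P)$, or there exist $x_t,x_s\in V(P)$ with $4\le t+1<s\le k-1$ such that $\{x_s,x_{s+1},\ldots,x_{k+2}\}\mapsto x\mapsto\{x_0,x_1,\ldots,x_t\}$.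
   Context: All digraphs are finite, without loops or multiple arcs (opposite arcs allowed). $x\rightarrow y$ means $xy\in A(D)$; $x,y$ are adjacent if $x\rightarrow y$ or $y\rightarrow x$. For disjoint vertex sets $X,Y$ (singletons identified with vertices): $X\rightarrow Y$ means every vertex of $X$ dominates every vertex of $Y$; $X\Rightarrow Y$ means there is no arc from $Y$ to $X$; $X\mapsto Y$ means both $X\rightarrow Y$ and $X\Rightarrow Y$. For $k\ge 2$, $D$ is $k$-quasi-transitive if for every path $x_0x_1\ldots x_k$ of length $k$, $x_0$ and $x_k$ are adjacent. $d(x,y)$ is the length of a shortest $(x,y)$-path, $\mathrm{diam}(D)=\max_{x,y}d(x,y)$. $D[S]$ is the induced subdigraph; a semicomplete digraph is one in which every two distinct vertices are adjacent. *)

(* Defs.v *)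
From mathcomp Require Import all_boot.
Set Implicit Arguments. Unset Strict Implicit. Unset Printing Implicit Defensive.

(* A digraph is a finite vertex type T with an arc relation A : rel T
   (x -> y iff A x y); no loops means A irreflexive. Opposite arcs allowed. *)

Section Digraphs.
Variables (T : finType) (A : rel T).

Definition adj (x y : T) : bool := A x y || A y x.

(* x :: q is a (directed) path: distinct vertices, consecutive arcs.
   Its length is size q; it goes from x to last x q. *)
Definition dpath (x : T) (q : seq T) : Prop := uniq (x :: q) /\ path A x q.

Definition k_quasi_transitive (k : nat) : Prop :=
  forall (x : T) (q : seq T), dpath x q -> size q = k -> adj x (last x q).

Definition strong : Prop :=
  forall x y : T, exists q, dpath x q /\ last x q = y.

Definition dist_eq (x y : T) (n : nat) : Prop :=
  (exists q, [/\ dpath x q, last x q = y & size q = n]) /\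
  (forall q, dpath x q -> last x q = y -> n <= size q).

Definition diam_ge (m : nat) : Prop :=
  exists x y n, dist_eq x y n /\ m <= n.

(* X => y : no arc from y to X ;  y => X : no arc from X to y *)
Definition set_mapsto (X : {set T}) (y : T) : Prop :=
  forall z, z \in X -> A z y /\ ~~ A y z.
Definition mapsto_set (y : T) (X : {set T}) : Prop :=
  forall z, z \in X -> A y z /\ ~~ A z y.

Definition semicomplete_on (S : {set T}) : Prop :=
  forall y z, y \in S -> z \in S -> y != z -> adj y z.

End Digraphs.

(* Main.v *)
Require Import Defs.
From mathcomp Require Import all_boot zify.
Set Implicit Arguments. Unset Strict Implicit. Unset Printing Implicit Defensive.


Definition goodR : rel nat := fun i j => (j == i.+1) || (j.+2 <= i).

Lemma last_iotaS m n : last m (iota m.+1 n) = m + n.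
Proof. elim: n m => [|n IH] m /=; first by rewrite addn0. by rewrite IH addSnnS. Qed.

Lemma path_iota_cat y n s : path goodR y (iota y.+1 n ++ s) = path goodR (y + n) s.
Proof.
elim: n y => [|n IH] y /=; first by rewrite addn0.
by rewrite IH /goodR eqxx /= addSnnS.
Qed.

Lemma path_iota y n : path goodR y (iota y.+1 n).
Proof. by rewrite -[iota _ _]cats0 path_iota_cat. Qed.

Lemma uniq_iota2 a n b m : (a + n <= b) || (b + m <= a) -> uniq (iota a n ++ iota b m) .
Proof.
move=> H; rewrite cat_uniq !iota_uniq /= andbT; apply/hasPn => i.
rewrite !mem_iota => /andP[h1 h2]; apply/negP => /andP[h3 h4]. lia.
Qed.

Lemma family (k b c : nat) : 5 <= k -> c < b -> b <= k + 2 ->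
  exists rest, [/\ path goodR b rest, uniq (b :: rest), all (fun i => i < k + 3) (b :: rest),
     size rest = k.-1 & last b rest = c].
Proof.
move=> hk hcb hb.
have [e [f [g [H1 H2 H3 H4 [H5 H6]]]]] : exists e f g, [/\ e + f + g = 3, e <= b - c - 1, f <= c, g <= k + 2 - b &
   (b - c - 1 - e = 0 -> f + 2 <= k + 2 - g) /\
   (0 < b - c - 1 - e -> c + 1 + e + 2 <= k + 2 - g /\ f + 2 <= b - 1)].
  case: (leqP (b - c) 4) => hd.
    case: (leqP (3 - (b - c - 1)) (k + 2 - b)) => hg.
      exists (b - c - 1), 0, (3 - (b - c - 1)); split; lia.
    exists (b - c - 1), (3 - (b - c - 1) - (k + 2 - b)), (k + 2 - b); split; lia.
  case: (leqP 3 (k + 2 - b)) => hg.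
    exists 0, 0, 3; split; lia.
  case: (leqP (3 - (k + 2 - b)) c) => hf.
    exists 0, (3 - (k + 2 - b)), (k + 2 - b); split; lia.
  exists (3 - (k + 2 - b) - c), c, (k + 2 - b); split; lia.
set h := k + 2 - g.
set m := c + 1 + e.
exists (iota b.+1 (h - b) ++ iota m (b - c - 1 - e) ++ iota f (c - f).+1); split.
- rewrite path_iota_cat.
  case Hl: (b - c - 1 - e) => [|l] /=.
    rewrite path_iota andbT /goodR. apply/orP; right. lia.
  rewrite path_iota_cat /= path_iota andbT /goodR.
  apply/andP; split; apply/orP; right; lia.
- rewrite -cat_cons; change (b :: iota b.+1 (h - b)) with (iota b (h - b).+1); rewrite catA.
  rewrite cat_uniq; apply/and3P; split.
  + apply: uniq_iota2; lia.
  + apply/hasPn => i; rewrite mem_iota mem_cat !mem_iota => hi.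
    apply/negP => /orP[] /andP[]; lia.
  + exact: iota_uniq.
- apply/allP => i; rewrite inE !mem_cat !mem_iota => /orP[/eqP->|/or3P[]/andP[]]; lia.
- rewrite !size_cat !size_iota. lia.
- rewrite !last_cat -/(iota f (c-f).+1) /= last_iotaS. lia.
Qed.


Section S.
Variables (T : finType) (A : rel T) (P : nat -> T) (N : nat).
Hypothesis Hfwd : forall i, i.+1 < N -> A (P i) (P i.+1).
Hypothesis Hback : forall i j, j < N -> i.+2 <= j -> A (P j) (P i).
Hypothesis Hinj : forall i j, i < N -> j < N -> P i = P j -> i = j.

Lemma pathP x s : all (fun i => i < N) (x :: s) -> path goodR x s -> path A (P x) (map P s).
Proof.
elim: s x => [|y s IH] x //= /and3P[hx hy hs] /andP[hxy hp].
rewrite IH ?hy ?hs // ?andbT.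
  case/orP: hxy => [/eqP Ey|h]; [rewrite Ey; apply: Hfwd; rewrite -Ey | apply: Hback]; by []. by rewrite /= hy.
Qed.

Lemma uniqP s : all (fun i => i < N) s -> uniq s -> uniq (map P s).
Proof.
move=> /allP hs hu; rewrite map_inj_in_uniq // => i j hi hj; apply: Hinj; exact: hs.
Qed.
End S.

Section S2.
Variables (T : finType) (A : rel T) (P : nat -> T) (k : nat) (x : T).
Hypothesis Hk : 5 <= k.
Hypothesis Hfwd : forall i, i.+1 < k + 3 -> A (P i) (P i.+1).
Hypothesis Hback : forall i j, j < k + 3 -> i.+2 <= j -> A (P j) (P i).
Hypothesis Hinj : forall i j, i < k + 3 -> j < k + 3 -> P i = P j -> i = j.
Hypothesis Hx : forall i, i < k + 3 -> x != P i.
Hypothesis Hq : k_quasi_transitive A k.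

Lemma notin_map s : all (fun i => i < k + 3) s -> x \notin map P s.
Proof.
move=> /allP hs; apply/mapP => [[i hi E]]. by move: (Hx (hs i hi)); rewrite E eqxx.
Qed.

Lemma Gout b rest : path goodR b rest -> uniq (b :: rest) ->
  all (fun i => i < k + 3) (b :: rest) -> size rest = k.-1 ->
  A x (P b) -> adj A x (P (last b rest)).
Proof.
move=> hp hu ha hs hxb.
have := Hq (q := map P (b :: rest)).
rewrite /= last_map size_map hs; apply; last by lia.
split.
  rewrite (cons_uniq x (map P (b :: rest))) notin_map //. by apply: (uniqP Hinj).
rewrite /= hxb /=; exact: (pathP Hfwd Hback).
Qed.

Lemma Gin b rest : path goodR b rest -> uniq (b :: rest) ->
  all (fun i => i < k + 3) (b :: rest) -> size rest = k.-1 ->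
  A (P (last b rest)) x -> adj A x (P b).
Proof.
move=> hp hu ha hs hxb.
have := Hq (x := P b) (q := rcons (map P rest) x).
rewrite last_rcons size_rcons size_map hs /adj orbC; apply; last by lia.
split.
  rewrite -rcons_cons rcons_uniq -/(map P (b :: rest)) notin_map //.
  exact: (uniqP Hinj).
by rewrite rcons_path (pathP Hfwd Hback) //= last_map.
Qed.

Lemma Lout b c : A x (P b) -> c < b -> b < k + 3 -> adj A x (P c).
Proof.
move=> h hcb hb; have hb' : b <= k + 2 by lia.
have [rest [hp hu ha hs hl]] := family Hk hcb hb'.
by rewrite -hl; apply: (Gout hp).
Qed.

Lemma Lin a c : A (P a) x -> a < c -> c < k + 3 -> adj A x (P c).
Proof.
move=> h hcb hb; have hb' : c <= k + 2 by lia.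
have [rest [hp hu ha hs hl]] := family Hk hcb hb'.
by apply: (Gin hp) => //; rewrite hl.
Qed.

Lemma fwd_facts j : j <= 3 -> let rest := iota j.+1 (k.-1) in
  [/\ path goodR j rest, uniq (j :: rest), all (fun i => i < k + 3) (j :: rest),
     size rest = k.-1 & last j rest = j + k.-1].
Proof.
move=> hj rest; split.
- exact: path_iota.
- exact: (iota_uniq j (k.-1).+1).
- apply/allP => i; rewrite -/(iota j (k.-1).+1) mem_iota; lia.
- by rewrite size_iota.
- by rewrite last_iotaS.
Qed.

Lemma Fout j : j <= 3 -> A x (P j) -> adj A x (P (j + k.-1)).
Proof.
move=> hj h; have [hp hu ha hs hl] := fwd_facts hj.
by rewrite -hl; apply: (Gout hp).
Qed.

Lemma Fin j : j <= 3 -> A (P (j + k.-1)) x -> adj A x (P j).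
Proof.
move=> hj h; have [hp hu ha hs hl] := fwd_facts hj.
by apply: (Gin hp) => //; rewrite hl.
Qed.
End S2.


Lemma inj_of_uniq (T : eqType) (P : nat -> T) n : uniq (map P (iota 0 n)) ->
  forall i j, i < n -> j < n -> P i = P j -> i = j.
Proof.
move=> hu i j hi hj E.
have hs : size (map P (iota 0 n)) = n by rewrite size_map size_iota.
have hi' : i < size (map P (iota 0 n)) by rewrite hs.
have hj' : j < size (map P (iota 0 n)) by rewrite hs.
move: (nth_uniq (P 0) hi' hj' hu).
rewrite !(nth_map 0) ?size_iota // !nth_iota // E eqxx ?add0n.
by move/esym/eqP.
Qed.

Lemma fwd_of_path (T : eqType) (A : rel T) (P : nat -> T) n m :
  path A (P m) (map P (iota m.+1 n)) -> forall i, m <= i -> i < m + n -> A (P i) (P i.+1).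
Proof.
elim: n m => [|n IH] m /=; first by move=> _ i; lia.
move=> /andP[h1 h2] i hmi hi.
case: (ltngtP m i) => [hlt||heq].
- apply: (IH m.+1) => //; lia.
- lia.
- by rewrite -heq.
Qed.

Lemma fpath (T : eqType) (A : rel T) (P : nat -> T) N
  (Hfwd : forall i, i.+1 < N -> A (P i) (P i.+1)) n m :
  m + n < N -> path A (P m) (map P (iota m.+1 n)).
Proof.
elim: n m => [|n IH] m //= h.
rewrite Hfwd ?IH //; lia.
Qed.


Ltac prune := repeat match goal with
 | H : ?t |- _ => lazymatch t with
    | is_true (leq _ _) => fail
    | @eq nat _ _ => fail
    | is_true (negb (@eq_op _ _ _)) => fail
    | nat => fail
    | _ => clear H
    end
 end.
Ltac slia := prune; lia.

Theorem lemma2p11 (T : finType) (A : rel T) (k : nat) (u v : T) (P : nat -> T) :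
  irreflexive A ->
  odd k -> 5 <= k ->
  strong A -> k_quasi_transitive A k ->
  diam_ge A (k + 2) ->
  dist_eq A u v (k + 2) ->
  (* P = x_0 x_1 ... x_{k+2} is a shortest (u,v)-path *)
  P 0 = u -> P (k + 2) = v ->
  dpath A (P 0) [seq P i | i <- iota 1 (k + 2)] ->
  let VP : {set T} := [set P (val i) | i : 'I_(k + 3)] in
  let I : {set T} := [set x | (x \notin VP) && [forall y in VP, ~~ A y x]] in
  let W : {set T} := [set x | (x \notin VP) && [forall y in VP, ~~ A x y]] in
  let B : {set T} := ~: (VP :|: I :|: W) in
  semicomplete_on A VP ->
  forall x, x \in B ->
    (forall y, y \in VP -> adj A x y) \/
    (exists t s : nat, [/\ 4 <= t + 1, t + 1 < s, s <= k - 1,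
       set_mapsto A [set P (val i) | i : 'I_(k + 3) & s <= val i] x &
       mapsto_set A x [set P (val i) | i : 'I_(k + 3) & val i <= t]]).
Proof.
move=> _ _ Hk _ Hq _ [_ Hd] HPu HPv [Hu Hp] VP I W B Hsc x.
have Hinj : forall i j, i < k + 3 -> j < k + 3 -> P i = P j -> i = j.
  apply: inj_of_uniq; have -> : k + 3 = (k + 2).+1 by lia. exact: Hu.
have Hfwd : forall i, i.+1 < k + 3 -> A (P i) (P i.+1).
  move=> i hi; apply: (fwd_of_path Hp); lia.
have HVP : forall i, i < k + 3 -> P i \in VP.
  move=> i hi; apply/imsetP; by exists (Ordinal hi).
have Hnoskip : forall i j, i.+2 <= j -> j < k + 3 -> ~~ A (P i) (P j).
  move=> i j hij hj; apply/negP => hA.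
  have [n' hn'] : exists n', k + 3 - j = n'.+1 by exists (k + 2 - j); lia.
  have := Hd (map P (iota 1 i ++ iota j n'.+1)).
  rewrite -HPu -HPv size_map size_cat !size_iota last_map last_cat last_iotaS /= last_iotaS.
  rewrite (_ : j + n' = k + 2); last by lia.
  move=> H; suff hd : dpath A (P 0) (map P (iota 1 i ++ j :: iota j.+1 n')).
    by have := H hd erefl; lia.
  change (j :: iota j.+1 n') with (iota j n'.+1); split.
    rewrite -(map_cons P 0) (uniqP Hinj) //.
    + apply/allP => z; rewrite inE mem_cat !mem_iota; lia.
    + rewrite -cat_cons; change (0 :: iota 1 i) with (iota 0 i.+1); apply: uniq_iota2; lia.
  rewrite map_cat cat_path last_map last_iotaS /= hA (fpath Hfwd) ?(fpath Hfwd) //; lia.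
have Hback : forall i j, j < k + 3 -> i.+2 <= j -> A (P j) (P i).
  move=> i j hj hij.
  have hi : i < k + 3 by lia.
  have := Hsc _ _ (HVP j hj) (HVP i hi).
  rewrite /adj (negbTE (Hnoskip i j hij hj)) orbF; apply.
  apply/eqP => /Hinj E; have := E hj hi; lia.
move=> hxB.
move: hxB; rewrite /B /I /W !inE negb_or => /andP[]; rewrite negb_or => /andP[hnVP hnI] hnW.
rewrite hnVP /= in hnI hnW.
have Hx : forall i, i < k + 3 -> x != P i.
  by move=> i hi; apply/eqP => E; move: hnVP; rewrite E HVP.
have [a ha hxa] : exists2 a, a < k + 3 & A (P a) x.
  move/forallPn: hnI => [y]; rewrite negb_imply negbK => /andP[/imsetP[i _ ->] hyx].
  by exists (val i); first exact: ltn_ord.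
have [b hb hbx] : exists2 b, b < k + 3 & A x (P b).
  move/forallPn: hnW => [y]; rewrite negb_imply negbK => /andP[/imsetP[i _ ->] hyx].
  by exists (val i); first exact: ltn_ord.
have Lout := Lout Hk Hfwd Hback Hinj Hx Hq.
have Lin := Lin Hk Hfwd Hback Hinj Hx Hq.
have Fout := Fout Hk Hfwd Hback Hinj Hx Hq.
have Fin := Fin Hk Hfwd Hback Hinj Hx Hq.
case: (boolP [forall i : 'I_(k + 3), adj A x (P i)]) => hall.
  by left => y /imsetP[i _ ->]; apply: (forallP hall).
right.
have [c hc hnc] : exists2 c, c < k + 3 & ~~ adj A x (P c).
  by move/forallPn: hall => [i hi]; exists (val i); first exact: ltn_ord.
have key : forall c, c < k + 3 -> ~~ adj A x (P c) -> forall i, i < k + 3 ->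
   (A x (P i) -> i < c) /\ (A (P i) x -> c < i).
  move=> c' hc' hnc' i hi; split => h.
    case: (ltngtP i c') => // [hlt|heq].
      by move: hnc'; rewrite (Lout i c' h hlt hi).
    by move: hnc'; rewrite -heq /adj h.
  case: (ltngtP i c') => // [hlt|heq].
    by move: hnc'; rewrite (Lin i c' h hlt hc').
  by move: hnc'; rewrite -heq /adj h orbT.
pose Q := fun n => (n < k + 3) && ~~ adj A x (P n).
have exQ : exists n, Q n by exists c; rewrite /Q hc.
have ubQ : forall n, Q n -> n <= k + 3 by move=> n /andP[h _]; lia.
case: (ex_minnP exQ) => c0 /andP[hc0 hnc0] hmin.
case: (ex_maxnP exQ ubQ) => c1 /andP[hc1 hnc1] hmax.
have low : forall i, i < c0 -> A x (P i) /\ ~~ A (P i) x.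
  move=> i hi; have hiN : i < k + 3 by slia.
  have hadj : adj A x (P i).
    apply: contraT => hn; have := hmin i; rewrite /Q hiN hn => /(_ isT); slia.
  have [_ K2] := key c0 hc0 hnc0 i hiN.
  have hnin : ~~ A (P i) x by apply/negP => /K2; slia.
  by split => //; move: hadj; rewrite /adj (negbTE hnin) orbF.
have high : forall i, c1 < i -> i < k + 3 -> A (P i) x /\ ~~ A x (P i).
  move=> i hi hiN.
  have hadj : adj A x (P i).
    apply: contraT => hn; have := hmax i; rewrite /Q hiN hn => /(_ isT); slia.
  have [K1 _] := key c1 hc1 hnc1 i hiN.
  have hnin : ~~ A x (P i) by apply/negP => /K1; slia.
  by split => //; move: hadj; rewrite /adj (negbTE hnin).
have hb0 : b < c0 := (key c0 hc0 hnc0 b hb).1 hbx.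
have ha1 : c1 < a := (key c1 hc1 hnc1 a ha).2 hxa.
have r0 : A x (P 0) by apply: (low 0 _).1; slia.
have rK : A (P (k + 2)) x by apply: (high (k + 2) _ _).1; slia.
have ad0 : adj A x (P 0) by rewrite /adj r0.
have adK : adj A x (P (k + 2)) by rewrite /adj rK orbT.
have ad3 : adj A x (P 3).
  by apply: Fin => //; rewrite (_ : 3 + k.-1 = k + 2) //; slia.
have adk : adj A x (P (k - 1)).
  by rewrite (_ : k - 1 = 0 + k.-1); [apply: Fout | slia].
have c0ge : 3 < c0.
  case: (leqP c0 3) => // hle; exfalso.
  have c03 : c0 != 3 by apply/eqP => E; move: hnc0; rewrite E ad3.
  have rin3 : A (P 3) x.
    move: ad3; rewrite /adj => /orP[h|//].
    have := (key c0 hc0 hnc0 3 _).1 h; slia.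
  have ri : forall i, 3 < i -> i < k + 3 -> A (P i) x.
    move=> i h1 h2; have := Lin 3 i rin3 h1 h2; rewrite /adj => /orP[h|//].
    have := (key c0 hc0 hnc0 i h2).1 h; slia.
  have ad1 : adj A x (P 1) by apply: Fin => //; apply: ri; slia.
  have ad2 : adj A x (P 2) by apply: Fin => //; apply: ri; slia.
  have : c0 = 0 \/ c0 = 1 \/ c0 = 2 by slia.
  by case => [E|[E|E]]; move: hnc0; rewrite E ?ad0 ?ad1 ?ad2.
have c1le : c1 <= k - 2.
  case: (leqP c1 (k - 2)) => // hle; exfalso.
  have c03 : c1 != k - 1 by apply/eqP => E; move: hnc1; rewrite E adk.
  have rout : A x (P (k - 1)).
    move: adk; rewrite /adj => /orP[//|h].
    have := (key c1 hc1 hnc1 (k - 1) _).2 h; slia.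
  have ro : forall i, i < k - 1 -> A x (P i).
    move=> i h1; have h2 : i < k + 3 by slia.
    have := Lout (k - 1) i rout h1 (_ : k - 1 < k + 3); rewrite /adj => /(_ _)/orP.
    case=> [//|//|h]; first slia.
    have := (key c1 hc1 hnc1 i h2).2 h; slia.
  have ad1 : adj A x (P k).
    by rewrite (_ : k = 1 + k.-1); [apply: Fout => //; apply: ro | ]; slia.
  have ad2 : adj A x (P (k + 1)).
    by rewrite (_ : k + 1 = 2 + k.-1); [apply: Fout => //; apply: ro | ]; slia.
  have : c1 = k \/ c1 = k + 1 \/ c1 = k + 2 by slia.
  by case => [E|[E|E]]; move: hnc1; rewrite E ?adK ?ad1 ?ad2.
have c01 : c0 <= c1 by apply: hmax; rewrite /Q hc0.
exists c0.-1, c1.+1; split; try slia.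
- move=> z /imsetP[i]; rewrite inE => hi ->.
  by apply: high; [slia | exact: ltn_ord].
- move=> z /imsetP[i]; rewrite inE => hi ->.
  by apply: low; slia.
Qed.
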